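(* Let $G$ be a connected graph. For any $i\in V(G)$, \[ r_i(G)\leq\frac{1}{\alpha_i(G)}. \]
   Context: $G$ is a finite simple graph with vertex set $[n]$ and Laplacian matrix $\mathcal{L}_G=D-A$. For a vertex $i$, $\alpha_i(G)=\min\{\mathbf{x}^\top\mathcal{L}_G\mathbf{x} : \mathbf{x}\in\mathbb{R}^n_+,\ \sum_j x_j^2=1,\ x_i=0\}$ (the inverse Perron value of $i$); for connected $G$ this equals the smallest eigenvalue of the principal submatrix $\mathcal{L}_G(i)$ obtained by deleting row and column $i$. The resistance distance $r_{ij}(G)$ is the effective resistance between $i$ and $j$ when every edge is a unit resistor, and the resistance eccentricity is $r_i(G)=\max_{j\in V(G)}r_{ij}(G)$. *)

(* Defs.v *)
From HB Require Import structures.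
From mathcomp Require Import all_boot all_order all_algebra.
From mathcomp Require Import classical_sets reals.
Set Implicit Arguments. Unset Strict Implicit. Unset Printing Implicit Defensive.
Import Order.TTheory GRing.Theory Num.Theory.
Local Open Scope ring_scope.
Local Open Scope classical_set_scope.

Definition simple_graph (n : nat) (e : rel 'I_n) : Prop :=
  irreflexive e /\ symmetric e.

Definition connected_graph (n : nat) (e : rel 'I_n) : Prop :=
  forall i j : 'I_n, connect e i j.

Definition degree (n : nat) (e : rel 'I_n) (i : 'I_n) : nat := #|[set j | e i j]|.

Definition laplacian (R : realType) (n : nat) (e : rel 'I_n) : 'M[R]_n :=
  \matrix_(i, j) (if i == j then (degree e i)%:R else if e i j then -1 else 0).

Definition quad_form (R : realType) (n : nat) (L : 'M[R]_n) (x : 'cV[R]_n) : R :=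
  (x^T *m L *m x) 0 0.

(* Inverse Perron value:
   alpha_i(G) = min { x^T L x : x >= 0, sum_j x_j^2 = 1, x_i = 0 }
   (the minimum is attained by compactness; we take the infimum). *)
Definition alpha (R : realType) (n : nat) (e : rel 'I_n) (i : 'I_n) : R :=
  inf [set quad_form (laplacian R e) x | x in
        [set x : 'cV[R]_n | (forall j, 0 <= x j 0)
                            /\ \sum_j x j 0 ^+ 2 = 1 /\ x i 0 = 0]].

(* Effective resistance between i and j with unit resistors: inject a unit
   current at i and extract it at j; a potential p solves p L = e_i - e_j
   (solvable for connected G; u *m pinvmx L is such a solution), and
   r_ij = p_i - p_j is the resulting potential difference. *)
Definition unit_current (R : realType) (n : nat) (i j : 'I_n) : 'rV[R]_n :=
  delta_mx 0 i - delta_mx 0 j.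

Definition potential (R : realType) (n : nat) (e : rel 'I_n) (i j : 'I_n) : 'rV[R]_n :=
  unit_current R i j *m pinvmx (laplacian R e).

Definition resistance (R : realType) (n : nat) (e : rel 'I_n) (i j : 'I_n) : R :=
  potential R e i j 0 i - potential R e i j 0 j.

Definition res_ecc (R : realType) (n : nat) (e : rel 'I_n) (i : 'I_n) : R :=
  \big[Num.max/0]_(j : 'I_n) resistance R e i j.

(* Main.v *)
Require Import Defs.
From HB Require Import structures.
From mathcomp Require Import all_boot all_order all_algebra.
From mathcomp Require Import classical_sets reals.
From mathcomp Require Import ring lra boolp.
Import Order.TTheory GRing.Theory Num.Theory.
Local Open Scope ring_scope.

Definition Ef {R : realType} {n} (e : rel 'I_n) (f g : 'I_n -> R) : R :=
  \sum_a \sum_(b | e a b) (f a - f b) * (g a - g b).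

Definition Bf {R : realType} {n} (e : rel 'I_n) (f g : 'I_n -> R) : R :=
  \sum_a f a * \sum_(b | e a b) (g a - g b).

Lemma sum_swap (R : realType) n (e : rel 'I_n) (F : 'I_n -> 'I_n -> R) :
  symmetric e ->
  \sum_a \sum_(b | e a b) F a b = \sum_a \sum_(b | e a b) F b a.
Proof.
move=> se.
under eq_bigr => a _ do rewrite big_mkcond.
rewrite exchange_big /=; apply: eq_bigr => a _; rewrite [RHS]big_mkcond; apply: eq_bigr => b _.
by rewrite se.
Qed.

Lemma Ef_Bf (R : realType) n (e : rel 'I_n) (f g : 'I_n -> R)  : symmetric e ->
  Ef e f g = 2 * Bf e f g.
Proof.
move=> se; rewrite /Ef /Bf.
have -> : \sum_a \sum_(b | e a b) (f a - f b) * (g a - g b) =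
  \sum_a \sum_(b | e a b) f a * (g a - g b) + \sum_a \sum_(b | e a b) f b * (g b - g a).
  rewrite -big_split; apply: eq_bigr => a _; rewrite -big_split; apply: eq_bigr => b _ /=; ring.
rewrite -(@sum_swap _ _ _ (fun a b => f a * (g a - g b)) se).
rewrite mulr2n mulrDl mul1r; congr (_ + _); apply: eq_bigr => a _; by rewrite mulr_sumr.
Qed.

Lemma Ef_sym (R : realType) n (e : rel 'I_n) (f g : 'I_n -> R)  : Ef e f g = Ef e g f.
Proof. by apply: eq_bigr => a _; apply: eq_bigr => b _; rewrite mulrC. Qed.

Lemma Ef_ge0 (R : realType) n (e : rel 'I_n) (f : 'I_n -> R) : 0 <= Ef e f f.
Proof. by apply: sumr_ge0 => a _; apply: sumr_ge0 => b _; rewrite -expr2 sqr_ge0. Qed.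

Lemma Ef_quad (R : realType) n (e : rel 'I_n) (f g : 'I_n -> R) (t : R) :
  Ef e (fun a => f a + t * g a) (fun a => f a + t * g a) =
  Ef e f f + 2 * t * Ef e f g + t ^+ 2 * Ef e g g.
Proof.
rewrite /Ef !mulr_sumr -!big_split; apply: eq_bigr => a _ /=.
rewrite !mulr_sumr -!big_split; apply: eq_bigr => b _ /=; ring.
Qed.

Lemma CS_alg (R : realType) (a b c : R) : 0 <= a -> 0 <= c ->
  (forall t, 0 <= c + 2 * t * b + t ^+ 2 * a) -> b ^+ 2 <= a * c.
Proof.
move=> a0 c0 H.
have [az|anz] := eqVneq a 0.
  rewrite az in H *.
  have [->|bnz] := eqVneq b 0; first by rewrite expr0n /= mul0r.
  have h := H (- (c + 1) / (2 * b)).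
  have key : c + 2 * (- (c + 1) / (2 * b)) * b = -1.
    by field.
  by move: h; rewrite mulr0 addr0 key oppr_ge0 ler10.
have ap : 0 < a by rewrite lt_neqAle eq_sym anz.
have h := H (- b / a).
have key : c + 2 * (- b / a) * b + (- b / a) ^+ 2 * a = (a * c - b ^+ 2) / a.
  by field.
by move: h; rewrite key pmulr_lge0 ?invr_gt0 // subr_ge0.
Qed.

Lemma Ef_CS (R : realType) n (e : rel 'I_n) (f g : 'I_n -> R)  :
  Ef e f g ^+ 2 <= Ef e g g * Ef e f f.
Proof.
apply: CS_alg; try exact: Ef_ge0.
by move=> t; rewrite -Ef_quad; exact: Ef_ge0.
Qed.

Lemma lap_row (R : realType) n (e : rel 'I_n) (a : 'I_n) (y : 'I_n -> R) :
  irreflexive e ->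
  \sum_b laplacian R e a b * y b = \sum_(b | e a b) (y a - y b).
Proof.
move=> ir.
rewrite (bigD1 a) //= mxE eqxx.
rewrite (eq_bigr (fun b => if e a b then - y b else 0)); last first.
  move=> b nba; rewrite mxE eq_sym (negbTE nba); case: (e a b); by rewrite ?mulN1r ?mul0r.
rewrite -big_mkcondr /= sumrB sumrN.
rewrite (eq_bigl (fun b => e a b)); last first.
  move=> b /=; case: eqP => [->|]; by rewrite ?ir ?andbT.
congr (_ + _).
rewrite sumr_const /degree mulr_natl; congr (_ *+ _).
by apply: eq_card => b; rewrite unfold_in /= asboolb.
Qed.

Lemma mxB (R : realType) n (e : rel 'I_n) (p : 'rV[R]_n) (y : 'cV[R]_n) :
  irreflexive e ->
  (p *m laplacian R e *m y) 0 0 = Bf e (fun a => p 0 a) (fun a => y a 0).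
Proof.
move=> ir; rewrite -mulmxA mxE /Bf; apply: eq_bigr => a _; congr (_ * _).
by rewrite mxE -lap_row.
Qed.

Lemma lap_tr (R : realType) n (e : rel 'I_n) : symmetric e ->
  (laplacian R e)^T = laplacian R e.
Proof.
move=> se; apply/matrixP => a b; rewrite !mxE eq_sym se.
by case: eqVneq => // ->.
Qed.

Lemma quadE (R : realType) n (e : rel 'I_n) (x : 'cV[R]_n) :
  simple_graph e ->
  2 * quad_form (laplacian R e) x = Ef e (fun a => x a 0) (fun a => x a 0).
Proof.
move=> [ir se]; rewrite Ef_Bf // /quad_form mxB //; congr (_ * _).
by apply: eq_bigr => a _; rewrite mxE.
Qed.

Lemma uE (R : realType) n (i j : 'I_n) (y : 'cV[R]_n) :
  (unit_current R i j *m y) 0 0 = y i 0 - y j 0.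
Proof.
by rewrite /unit_current mulmxBl -!rowE !mxE.
Qed.

Lemma ker_const (R : realType) n (e : rel 'I_n) (c : 'cV[R]_n) :
  simple_graph e -> connected_graph e ->
  laplacian R e *m c = 0 -> forall a b, c a 0 = c b 0.
Proof.
move=> sg cg Lc.
have E0 : Ef e (fun a => c a 0) (fun a => c a 0) = 0.
  by rewrite -quadE // /quad_form -mulmxA Lc mulmx0 mxE mulr0.
have edge : forall a b, e a b -> c a 0 = c b 0.
  move=> a b eab.
  have nn : forall a b, 0 <= (c a 0 - c b 0) * (c a 0 - c b 0).
    by move=> ? ?; rewrite -expr2 sqr_ge0.
  have h1 : \sum_(b | e a b) (c a 0 - c b 0) * (c a 0 - c b 0) = 0.
    by apply: (psumr_eq0P _ E0) => // x _; apply: sumr_ge0.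
  have h2 : (c a 0 - c b 0) * (c a 0 - c b 0) = 0 by apply: (psumr_eq0P _ h1).
  by apply/eqP; rewrite -subr_eq0; move: h2 => /eqP; rewrite mulf_eq0 orbb.
move=> a b.
have cl : closed e [pred x | c x 0 == c b 0].
  move=> x y exy; rewrite !inE (edge x y exy) //.
have := closed_connect cl (cg a b); rewrite !inE eqxx => /eqP //.
Qed.

Lemma pot_eq (R : realType) n (e : rel 'I_n) (i j : 'I_n) :
  simple_graph e -> connected_graph e ->
  potential R e i j *m laplacian R e = unit_current R i j.
Proof.
move=> sg cg; apply: mulmxKpV; rewrite submxE; apply/eqP/matrixP => z k.
rewrite [RHS]mxE (ord1 z).
set C := cokermx _.
have CL : laplacian R e *m C = 0 by apply: mulmx_coker.
clearbody C.
have -> : (unit_current R i j *m C) 0 k = (unit_current R i j *m col k C) 0 0.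
  rewrite !mxE; apply: eq_bigr => m _; by rewrite [col _ _ _ _]mxE.
rewrite uE; apply/eqP; rewrite subr_eq0; apply/eqP; apply: ker_const => //.
  by []. by rewrite colE mulmxA CL mul0mx.
Qed.

Lemma Ef_scale (R : realType) n (e : rel 'I_n) (f : 'I_n -> R) (c : R) :
  Ef e (fun a => c * f a) (fun a => c * f a) = c ^+ 2 * Ef e f f.
Proof.
rewrite /Ef mulr_sumr; apply: eq_bigr => a _; rewrite mulr_sumr.
by apply: eq_bigr => b _; ring.
Qed.

Lemma Ef_shift (R : realType) n (e : rel 'I_n) (f : 'I_n -> R) (c : R) :
  Ef e (fun a => f a - c) (fun a => f a - c) = Ef e f f.
Proof.
by apply: eq_bigr => a _; apply: eq_bigr => b _; congr (_ * _); ring.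
Qed.

Lemma Ef_abs (R : realType) n (e : rel 'I_n) (f : 'I_n -> R) :
  Ef e (fun a => `|f a|) (fun a => `|f a|) <= Ef e f f.
Proof.
apply: ler_sum => a _; apply: ler_sum => b _.
rewrite -!expr2 -[X in _ <= X](real_normK (num_real _)) -[X in X <= _](real_normK (num_real _)).
rewrite lerXn2r ?nnegrE ?normr_ge0 //.
exact: ler_dist_dist.
Qed.

Lemma pot_E (R : realType) n (e : rel 'I_n) (i k : 'I_n) (g : 'I_n -> R) :
  simple_graph e -> connected_graph e ->
  Ef e (fun a => potential R e i k 0 a) g = 2 * (g i - g k).
Proof.
move=> sg cg; have [ir se] := sg.
have -> : g = (fun a => (\col_(b < n) g b) a 0) by apply: boolp.funext => a; rewrite mxE.
rewrite Ef_Bf // -mxB // pot_eq // uE; by rewrite !mxE.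
Qed.

Lemma res_E (R : realType) n (e : rel 'I_n) (i k : 'I_n) :
  simple_graph e -> connected_graph e ->
  Ef e (fun a => potential R e i k 0 a) (fun a => potential R e i k 0 a)
  = 2 * resistance R e i k.
Proof. by move=> sg cg; rewrite pot_E. Qed.

Lemma quad_ge0 (R : realType) n (e : rel 'I_n) (x : 'cV[R]_n) :
  simple_graph e -> 0 <= quad_form (laplacian R e) x.
Proof.
move=> sg; have := @Ef_ge0 _ _ e (fun a => x a 0); rewrite -quadE //.
by rewrite pmulr_rge0.
Qed.

Local Open Scope classical_set_scope.

Lemma alpha_lb (R : realType) n (e : rel 'I_n) (i : 'I_n) :
  simple_graph e ->
  has_lbound [set quad_form (laplacian R e) x | x in
        [set x : 'cV[R]_n | (forall j, 0 <= x j 0)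
                            /\ \sum_j x j 0 ^+ 2 = 1 /\ x i 0 = 0]].
Proof. by move=> sg; exists 0 => _ [x _ <-]; apply: quad_ge0. Qed.

Lemma alpha_ge0 (R : realType) n (e : rel 'I_n) (i : 'I_n) :
  simple_graph e -> 0 <= alpha R e i.
Proof.
move=> sg; rewrite /alpha.
set T := [set _ | _ in _].
have [[y Ty]|ne] := pselect (exists y, T y).
  apply: lb_le_inf; first by exists y.
  by move=> _ [x _ <-]; apply: quad_ge0.
have -> : T = set0.
  by apply/seteqP; split => y //= Ty; exfalso; apply: ne; exists y.
by rewrite inf0.
Qed.

Definition Sset (R : realType) {n} (i : 'I_n) : set 'cV[R]_n :=
  [set x : 'cV[R]_n | (forall j, 0 <= x j 0) /\ \sum_j x j 0 ^+ 2 = 1 /\ x i 0 = 0].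

Lemma res_le (R : realType) n (e : rel 'I_n) (i j : 'I_n) :
  simple_graph e -> connected_graph e ->
  resistance R e i j <= (alpha R e i)^-1.
Proof.
move=> sg cg.
have pu : forall z : R, 0 < z -> z \in [pred x0 in GRing.unit | 0 < x0].
  by move=> z z0; rewrite inE unitfE gt_eqF //=.
have aE : alpha R e i = inf [set quad_form (laplacian R e) x | x in Sset R i] by [].
set r := resistance R e i j.
have [rle0|rgt0] := lerP r 0.
  by apply: (le_trans rle0); rewrite invr_ge0 alpha_ge0.
pose p := fun a => potential R e i j 0 a.
pose q := fun a => p a - p i.
have Ep : Ef e p p = 2 * r by apply: res_E.
have qj : q j = - r by rewrite /q /p /r /resistance opprB.
pose N := \sum_a q a ^+ 2.
have Nge : r ^+ 2 <= N.
  rewrite /N (bigD1 j) //= qj sqrrN lerDl; apply: sumr_ge0 => a _; exact: sqr_ge0.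
have Npos : 0 < N by apply: lt_le_trans Nge; rewrite exprn_gt0.
pose s := Num.sqrt N.
have s2 : s ^+ 2 = N by rewrite sqr_sqrtr // ltW.
have spos : 0 < s by rewrite sqrtr_gt0.
pose x : 'cV[R]_n := \col_a (s^-1 * `|q a|).
have xS : Sset R i x.
  split; first by move=> a; rewrite mxE mulr_ge0 // invr_ge0 ltW.
  split; last by rewrite mxE /q subrr normr0 mulr0.
  under eq_bigr do rewrite mxE exprMn real_normK ?num_real //.
  by rewrite -mulr_sumr -/N exprVn s2 mulVf // gt_eqF.
have Qx2 : 2 * quad_form (laplacian R e) x <= s^-1 ^+ 2 * (2 * r).
  rewrite quadE //.
  have -> : (fun a => x a 0) = (fun a => s^-1 * `|q a|).
    by apply: boolp.funext => a; rewrite mxE.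
  rewrite Ef_scale; apply: ler_wpM2l; first by rewrite exprn_ge0 // invr_ge0 ltW.
  rewrite -Ep; apply: le_trans (@Ef_abs _ _ e q) _; by rewrite /q Ef_shift.
have Qx : quad_form (laplacian R e) x <= r^-1.
  have h1 : quad_form (laplacian R e) x <= N^-1 * r.
    by move: Qx2; rewrite exprVn s2 mulrCA ler_pM2l.
  apply: le_trans h1 _.
  have h2 : N^-1 <= (r ^+ 2)^-1.
    by rewrite ler_pV2 ?pu ?exprn_gt0.
  have -> : r^-1 = (r ^+ 2)^-1 * r by field; rewrite gt_eqF.
  by rewrite ler_wpM2r // ltW.
have alpha_le : alpha R e i <= r^-1.
  rewrite aE; apply: le_trans Qx.
  by apply: (ge_inf (@alpha_lb R n e i sg)); exists x.
have alpha_pos : 0 < alpha R e i.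
  pose Sg := \sum_k resistance R e i k.
  have key : forall y, Sset R i y -> 1 <= quad_form (laplacian R e) y * Sg.
    move=> y [y0 [y1 yi]]; rewrite -y1 /Sg mulr_sumr; apply: ler_sum => k _.
    have := @Ef_CS _ _ e (fun a => potential R e i k 0 a) (fun a => y a 0).
    rewrite pot_E // res_E // -quadE // yi => h.
    nra.
  have Sgpos : 0 < Sg.
    rewrite ltNge; apply/negP => Sle; have := key x xS.
    rewrite leNgt => /negP; apply; apply: le_lt_trans (mulr_ge0_le0 _ Sle) ltr01.
    exact: quad_ge0.
  apply: (@lt_le_trans _ _ Sg^-1); first by rewrite invr_gt0.
  rewrite aE; apply: lb_le_inf.
    by exists (quad_form (laplacian R e) x), x.
  move=> _ [y yS <-]; have := key y yS.
  by rewrite -[X in _ -> X <= _]mul1r ler_pdivrMr.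
by rewrite -[r]invrK ler_pV2 ?pu ?invr_gt0.
Qed.

Local Close Scope classical_set_scope.

Theorem theorem4p1 (R : realType) (n : nat) (e : rel 'I_n) (i : 'I_n) :
  simple_graph e -> connected_graph e ->
  res_ecc R e i <= (alpha R e i)^-1.
Proof.
move=> sg cg; rewrite /res_ecc.
apply: bigmax_le; first by rewrite invr_ge0 alpha_ge0.
by move=> j _; apply: res_le.
Qed.
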